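(* Let $\mathfrak{g}=\mathfrak{sl}_2(\mathbb{R})$ or $\mathfrak{g}=\mathfrak{so}(3)$. For every integer $n\ge1$, \[S^{\mathfrak{g}}_{2n}(\mathfrak{g},\mathfrak{g})=0\quad\text{and}\quad S^{\mathfrak{g}}_{2n+1}(\mathfrak{g},\mathfrak{g})=\mathbb{R}\,B^{\mathfrak{g}}_n.\]
   Context: $\mathfrak{sl}_2(\mathbb{R})$: traceless real $2\times2$ matrices; $\mathfrak{so}(3)$: skew-symmetric real $3\times3$ matrices. $S^{\mathfrak{g}}_m(\mathfrak{g},\mathfrak{g})$ is the space of symmetric $\mathbb{R}$-multilinear maps $B:\mathfrak{g}^m\to\mathfrak{g}$ that are invariant: $[y,B(x_1,\ldots,x_m)]=\sum_{i=1}^mB(x_1,\ldots,[y,x_i],\ldots,x_m)$ for all $y,x_i$. Let $\langle\cdot,\cdot\rangle$ be the symmetric bilinear form with $\langle x,x\rangle=\frac12\mathrm{tr}(\mathrm{ad}_x^2)$. For $n\ge1$ let $P_n(x_1,\ldots,x_{2n})=\frac{1}{(2n)!}\sum_{\sigma\in S_{2n}}\langle x_{\sigma(1)},x_{\sigma(2)}\rangle\cdots\langle x_{\sigma(2n-1)},x_{\sigma(2n)}\rangle$ and $B^{\mathfrak{g}}_n(x_1,\ldots,x_{2n+1})=\sum_{k=1}^{2n+1}P_n(x_1,\ldots,\hat{x}_k,\ldots,x_{2n+1})\,x_k$ (hat denotes omission). *)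

(* Defs.v *)
From HB Require Import structures.
From mathcomp Require Import all_boot all_order all_algebra all_fingroup.
From mathcomp Require Import Rstruct zify.
Set Implicit Arguments. Unset Strict Implicit. Unset Printing Implicit Defensive.
Import Order.TTheory GRing.Theory Num.Theory.
Local Open Scope ring_scope.

Notation RR := Rdefinitions.R.

Definition lbr (k : nat) (x y : 'M[RR]_k) : 'M[RR]_k := x *m y - y *m x.

(* trace of an endomorphism f of the subspace g (f assumed to preserve g),
   computed in the basis vbasis g *)
Definition vtr (k : nat) (g : {vspace 'M[RR]_k}) (f : 'M[RR]_k -> 'M[RR]_k) : RR :=
  \sum_(i < \dim g) coord (vbasis g) i (f (tnth (vbasis g) i)).

Definition kform (k : nat) (g : {vspace 'M[RR]_k}) (x y : 'M[RR]_k) : RR :=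
  2^-1 * vtr g (fun z => lbr x (lbr y z)).

Lemma dbl_lt (n : nat) (j : 'I_n) (b : bool) : (j.*2 + b < n.*2)%N.
Proof. case: j => j /= hj; case: b; rewrite /= -!muln2; lia. Qed.

Definition pidx (n : nat) (j : 'I_n) (b : bool) : 'I_(n.*2) := Ordinal (dbl_lt j b).

Definition Pn (k : nat) (g : {vspace 'M[RR]_k}) (n : nat) (x : 'I_(n.*2) -> 'M[RR]_k) : RR :=
  ((n.*2)`!%:R)^-1 *
  \sum_(s : 'S_(n.*2)) \prod_(j < n) kform g (x (s (pidx j false))) (x (s (pidx j true))).

Arguments Pn {k} g n x.

Definition Bn (k : nat) (g : {vspace 'M[RR]_k}) (n : nat)
    (x : 'I_(n.*2.+1) -> 'M[RR]_k) : 'M[RR]_k :=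
  \sum_(i < n.*2.+1) Pn g n (fun j : 'I_(n.*2) => x (lift i j)) *: x i.

Arguments Bn {k} g n x.

Definition upd (k m : nat) (x : 'I_m -> 'M[RR]_k) (i : 'I_m) (v : 'M[RR]_k) : 'I_m -> 'M[RR]_k :=
  fun j => if j == i then v else x j.

Definition in_g (k m : nat) (g : {vspace 'M[RR]_k}) (x : 'I_m -> 'M[RR]_k) : Prop :=
  forall i, x i \in g.

(* B (restricted to g^m) is an element of S^g_m(g,g): g-valued, R-multilinear,
   symmetric and g-invariant *)
Definition inS (k m : nat) (g : {vspace 'M[RR]_k}) (B : ('I_m -> 'M[RR]_k) -> 'M[RR]_k) : Prop :=
  [/\ (forall x, in_g g x -> B x \in g),
      (forall x i (a : RR) y z, in_g g x -> y \in g -> z \in g ->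
          B (upd x i (a *: y + z)) = a *: B (upd x i y) + B (upd x i z)),
      (forall x (s : 'S_m), in_g g x -> B (fun j => x (s j)) = B x)
    & (forall y x, y \in g -> in_g g x ->
          lbr y (B x) = \sum_(i < m) B (upd x i (lbr y (x i))))].

(* Main.v *)
Require Import Defs.
From HB Require Import structures.
From mathcomp Require Import all_boot all_order all_algebra all_fingroup.
From mathcomp Require Import Rstruct zify ring lra.
Import Order.TTheory GRing.Theory Num.Theory.
Local Open Scope ring_scope.
From Stdlib Require Import FunctionalExtensionality Classical.
Set Implicit Arguments. Unset Strict Implicit. Unset Printing Implicit Defensive.

Section Basic.
Variable k : nat.
Notation M := 'M[RR]_k.

Lemma lbrDr (x y z : M) (a : RR) : lbr x (a *: y + z) = a *: lbr x y + lbr x z.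
Proof. rewrite /lbr mulmxDr mulmxDl -scalemxAr -scalemxAl scalerBr; by rewrite addrACA opprD. Qed.
Lemma lbrDl (x y z : M) (a : RR) : lbr (a *: x + y) z = a *: lbr x z + lbr y z.
Proof. rewrite /lbr mulmxDr mulmxDl -scalemxAr -scalemxAl scalerBr; by rewrite addrACA opprD. Qed.
Lemma lbr0r (x : M) : lbr x 0 = 0.
Proof. by rewrite /lbr mulmx0 mul0mx subrr. Qed.
Lemma lbr0l (x : M) : lbr 0 x = 0.
Proof. by rewrite /lbr mulmx0 mul0mx subrr. Qed.
Lemma lbrxx (x : M) : lbr x x = 0.
Proof. by rewrite /lbr subrr. Qed.
Lemma lbrC (x y : M) : lbr y x = - lbr x y.
Proof. by rewrite /lbr opprB. Qed.
Lemma lbrAr (x y z : M) : lbr x (y + z) = lbr x y + lbr x z.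
Proof. by have := lbrDr x y z 1; rewrite !scale1r. Qed.
Lemma lbrAl (x y z : M) : lbr (x + y) z = lbr x z + lbr y z.
Proof. by have := lbrDl x y z 1; rewrite !scale1r. Qed.
Lemma lbr_sumr (I : Type) (r : seq I) (x : M) (F : I -> M) :
  lbr x (\sum_(i <- r) F i) = \sum_(i <- r) lbr x (F i).
Proof.
elim: r => [|a s IH]; first by rewrite !big_nil lbr0r.
by rewrite !big_cons lbrAr IH.
Qed.
Lemma lbr_suml (I : Type) (r : seq I) (x : M) (F : I -> M) :
  lbr (\sum_(i <- r) F i) x = \sum_(i <- r) lbr (F i) x.
Proof.
elim: r => [|a s IH]; first by rewrite !big_nil lbr0l.
by rewrite !big_cons lbrAl IH.
Qed.
Lemma lbrZr (x y : M) a : lbr x (a *: y) = a *: lbr x y.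
Proof. by rewrite -[a *: y]addr0 lbrDr lbr0r addr0. Qed.
Lemma lbrZl (x y : M) a : lbr (a *: x) y = a *: lbr x y.
Proof. by rewrite -[a *: x]addr0 lbrDl lbr0l addr0. Qed.
Lemma jacobi (y a z : M) : lbr (lbr y a) z = lbr y (lbr a z) - lbr a (lbr y z).
Proof.
rewrite /lbr !mulmxBl !mulmxBr !mulmxA.
move: (y *m a *m z) (a *m y *m z) (z *m y *m a) (z *m a *m y) (y *m z *m a) (a *m z *m y).
move=> A B C D E F; apply/matrixP => i j; rewrite !mxE; ring.
Qed.
End Basic.

Section Upd.
Variable k : nat.
Notation M := 'M[RR]_k.
Variable m : nat.
Implicit Types (x : 'I_m -> M).
Lemma upd_same x i v : upd x i v i = v.
Proof. by rewrite /upd eqxx. Qed.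
Lemma upd_other x i v j : j != i -> upd x i v j = x j.
Proof. by rewrite /upd => /negbTE ->. Qed.
Lemma upd_upd_same x i v w : upd (upd x i v) i w = upd x i w.
Proof. apply: functional_extensionality => j; rewrite /upd; by case: (j == i). Qed.
Lemma upd_comm x i j v w : i != j -> upd (upd x i v) j w = upd (upd x j w) i v.
Proof.
move=> hij; apply: functional_extensionality => t; rewrite /upd.
case: (eqVneq t j) => htj; case: (eqVneq t i) => hti //.
by move: hij; rewrite -htj -hti eqxx.
Qed.
Lemma upd_id x i : upd x i (x i) = x.
Proof. apply: functional_extensionality => j; rewrite /upd; by case: eqP => [->|]. Qed.
Lemma in_g_upd (g : {vspace M}) x i v : in_g g x -> v \in g -> in_g g (upd x i v).
Proof. by move=> hx hv j; rewrite /upd; case: (j == i). Qed.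
Lemma upd_swap x i j : i != j -> upd (upd x i (x j)) j (x i) = (fun t => x (tperm i j t)).
Proof.
move=> hij; apply: functional_extensionality => t; rewrite /upd.
case: (eqVneq t j) => [->|htj]; first by rewrite tpermR.
case: (eqVneq t i) => [->|hti]; first by rewrite tpermL.
by rewrite tpermD // eq_sym.
Qed.
End Upd.

Section Ext.
Variable k : nat.
Notation M := 'M[RR]_k.
Variable m : nat.

Definition ext (y : 'I_m -> M) (p q : M) (t : 'I_m.+2) : M :=
  match unlift ord0 t with
  | None => p
  | Some t' => match unlift ord0 t' with None => q | Some t'' => y t'' end
  end.

Definition ord1' : 'I_m.+2 := lift ord0 ord0.

Lemma ext0 y p q : ext y p q ord0 = p.
Proof. by rewrite /ext unlift_none. Qed.
Lemma ext1 y p q : ext y p q ord1' = q.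
Proof. by rewrite /ext /ord1' liftK unlift_none. Qed.
Lemma extL y p q i : ext y p q (lift ord0 (lift ord0 i)) = y i.
Proof. by rewrite /ext !liftK. Qed.

Lemma ext_cases (t : 'I_m.+2) : [\/ t = ord0, t = ord1' | exists i, t = lift ord0 (lift ord0 i)].
Proof.
case: (unliftP ord0 t) => [t' ->|->]; last by apply: Or31.
case: (unliftP ord0 t') => [t'' ->|->]; last by apply: Or32.
by apply: Or33; exists t''.
Qed.

Lemma ext_in_g (g : {vspace M}) y p q : in_g g y -> p \in g -> q \in g -> in_g g (ext y p q).
Proof.
move=> hy hp hq t; case: (ext_cases t) => [->|->|[i ->]]; by rewrite ?ext0 ?ext1 ?extL.
Qed.

Lemma ord0_neq1 : (ord0 : 'I_m.+2) != ord1'.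
Proof. by []. Qed.
Lemma liftL_neq0 i : (lift ord0 (lift ord0 i) : 'I_m.+2) != ord0.
Proof. by rewrite eq_sym neq_lift. Qed.
Lemma liftL_neq1 i : (lift ord0 (lift ord0 i) : 'I_m.+2) != ord1'.
Proof. by rewrite /ord1' (inj_eq (@lift_inj _ ord0)) eq_sym neq_lift. Qed.

Lemma ext_upd y i v p q : ext (upd y i v) p q = upd (ext y p q) (lift ord0 (lift ord0 i)) v.
Proof.
apply: functional_extensionality => t; case: (ext_cases t) => [->|->|[j ->]].
- by rewrite ext0 upd_other ?ext0 // eq_sym liftL_neq0.
- by rewrite ext1 upd_other ?ext1 // eq_sym liftL_neq1.
rewrite extL /upd (inj_eq (@lift_inj _ ord0)) (inj_eq (@lift_inj _ ord0)).
by case: (j == i); rewrite ?extL.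
Qed.

Lemma upd_ext0 y p q w : upd (ext y p q) ord0 w = ext y w q.
Proof.
apply: functional_extensionality => t; case: (ext_cases t) => [->|->|[j ->]].
- by rewrite upd_same ext0.
- by rewrite upd_other // ?ext1 // eq_sym ord0_neq1.
- by rewrite upd_other ?extL // liftL_neq0.
Qed.
Lemma upd_ext1 y p q w : upd (ext y p q) ord1' w = ext y p w.
Proof.
apply: functional_extensionality => t; case: (ext_cases t) => [->|->|[j ->]].
- by rewrite upd_other ?ext0 // ord0_neq1.
- by rewrite upd_same ext1.
- by rewrite upd_other ?extL // liftL_neq1.
Qed.

Lemma upd_extL y p q i w : upd (ext y p q) (lift ord0 (lift ord0 i)) w = ext (upd y i w) p q.
Proof. by rewrite ext_upd. Qed.

Lemma ext_perm y (s : 'S_m) p q :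
  ext (fun j => y (s j)) p q = (fun t => ext y p q (lift_perm ord0 ord0 (lift_perm ord0 ord0 s) t)).
Proof.
apply: functional_extensionality => t; case: (ext_cases t) => [->|->|[j ->]].
- by rewrite lift_perm_id !ext0.
- by rewrite /ord1' lift_perm_lift lift_perm_id -/ord1' !ext1.
- by rewrite !lift_perm_lift !extL.
Qed.
End Ext.

Section Gen.
Variable k : nat.
Notation M := 'M[RR]_k.
Variable g : {vspace M}.
Variable u : 'I_3 -> M.
Variable co : 'I_3 -> M -> RR.
Variable f : 'I_3 -> 'I_3 -> 'I_3 -> RR.
Variable eta : 'I_3 -> RR.
Variable lam : RR.
Hypothesis co_lin : forall a al x y, co a (al *: x + y) = al * co a x + co a y.
Hypothesis u_g : forall a, u a \in g.
Hypothesis dec : forall x, x \in g -> x = \sum_a co a x *: u a.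
Hypothesis co_u : forall a b, co a (u b) = (a == b)%:R.
Hypothesis br : forall a b, lbr (u a) (u b) = \sum_c f a b c *: u c.

Definition linG (L : M -> M) := forall al y z, y \in g -> z \in g -> L (al *: y + z) = al *: L y + L z.

Lemma linG0 L : linG L -> L 0 = 0.
Proof.
move=> hL; have := hL 1 0 0 (mem0v g) (mem0v g).
rewrite !scale1r addr0 => h; apply: (@addrI _ (L 0)); by rewrite addr0 -h.
Qed.
Lemma linGZ L al y : linG L -> y \in g -> L (al *: y) = al *: L y.
Proof. by move=> hL hy; rewrite -[al *: y]addr0 (hL _ _ _ hy (mem0v g)) (linG0 hL) addr0. Qed.
Lemma linGD L y z : linG L -> y \in g -> z \in g -> L (y + z) = L y + L z.
Proof. by move=> hL hy hz; rewrite -[y]scale1r (hL _ _ _ hy hz) !scale1r. Qed.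
Lemma linG_sum L (I : Type) (r : seq I) (al : I -> RR) (v : I -> M) :
  linG L -> (forall i, v i \in g) ->
  L (\sum_(i <- r) al i *: v i) = \sum_(i <- r) al i *: L (v i).
Proof.
move=> hL hv; elim: r => [|a s IH]; first by rewrite !big_nil (linG0 hL).
rewrite !big_cons (hL _ _ _ (hv a)) ?IH //; apply: rpred_sum => i _; exact: rpredZ.
Qed.

Lemma co0 a : co a 0 = 0.
Proof. have := co_lin a 1 0 0; rewrite scale1r addr0 mul1r => h; lra. Qed.
Lemma coZ a al x : co a (al *: x) = al * co a x.
Proof. by rewrite -[al *: x]addr0 co_lin co0 addr0. Qed.
Lemma coD a x y : co a (x + y) = co a x + co a y.
Proof. by rewrite -[x]scale1r co_lin mul1r scale1r. Qed.
Lemma coN a x : co a (- x) = - co a x.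
Proof. by rewrite -scaleN1r coZ mulN1r. Qed.
Lemma coB a x y : co a (x - y) = co a x - co a y.
Proof. by rewrite coD coN. Qed.
Lemma co_sum a (I : Type) (r : seq I) (F : I -> M) :
  co a (\sum_(i <- r) F i) = \sum_(i <- r) co a (F i).
Proof. elim: r => [|b s IH]; first by rewrite !big_nil co0. by rewrite !big_cons coD IH. Qed.

Lemma sum_delta (F : 'I_3 -> RR) (a : 'I_3) : \sum_b F b * (a == b)%:R = F a.
Proof.
rewrite (bigD1 a) //= eqxx mulr1 big1 ?addr0 // => i /negbTE.
by rewrite eq_sym => ->; rewrite mulr0.
Qed.
Lemma sum_delta' (F : 'I_3 -> RR) (a : 'I_3) : \sum_b F b * (b == a)%:R = F a.
Proof. by under eq_bigr do rewrite eq_sym; exact: sum_delta. Qed.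

Lemma co_dec a x : co a (\sum_b x b *: u b) = x a.
Proof.
rewrite co_sum; under eq_bigr do rewrite coZ co_u. by rewrite sum_delta.
Qed.

Lemma br_g a b : lbr (u a) (u b) \in g.
Proof. rewrite br; apply: rpred_sum => c _; exact: rpredZ. Qed.

Lemma lbr_g x y : x \in g -> y \in g -> lbr x y \in g.
Proof.
move=> hx hy; rewrite (dec hx) lbr_suml; apply: rpred_sum => a _.
rewrite lbrZl (dec hy) lbr_sumr; apply: rpredZ; apply: rpred_sum => b _.
rewrite lbrZr; apply: rpredZ; exact: br_g.
Qed.

Lemma eq_co x y : x \in g -> y \in g -> (forall a, co a x = co a y) -> x = y.
Proof. by move=> hx hy h; rewrite (dec hx) (dec hy); apply: eq_bigr => a _; rewrite h. Qed.

Lemma co_adu kk c z : z \in g -> co kk (lbr (u c) z) = \sum_b co b z * f c b kk.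
Proof.
move=> hz; rewrite {1}(dec hz) lbr_sumr co_sum; apply: eq_bigr => b _.
by rewrite lbrZr coZ br co_dec.
Qed.
Lemma co_uad kk c z : z \in g -> co kk (lbr z (u c)) = \sum_b co b z * f b c kk.
Proof.
move=> hz; rewrite {1}(dec hz) lbr_suml co_sum; apply: eq_bigr => b _.
by rewrite lbrZl coZ br co_dec.
Qed.

Lemma Phi_expand (Phi : M -> M -> M) p q :
  (forall q, q \in g -> linG (fun p => Phi p q)) -> (forall p, p \in g -> linG (Phi p)) ->
  p \in g -> q \in g ->
  Phi p q = \sum_kk \sum_l (co kk p * co l q) *: Phi (u kk) (u l).
Proof.
move=> hL hR hp hq; rewrite {1}(dec hp) (linG_sum _ _ (hL q hq)) //.
apply: eq_bigr => kk _; rewrite {1}(dec hq) (linG_sum _ _ (hR _ (u_g kk))) //.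
rewrite scaler_sumr; apply: eq_bigr => l _; by rewrite scalerA.
Qed.

Lemma sum_norm (I : Type) (r : seq I) (al : I -> RR) (A : I -> 'I_3 -> 'I_3 -> RR) (P : 'I_3 -> 'I_3 -> M) :
  \sum_(c <- r) al c *: (\sum_kk \sum_l A c kk l *: P kk l) =
  \sum_kk \sum_l (\sum_(c <- r) al c * A c kk l) *: P kk l.
Proof.
under eq_bigr do rewrite scaler_sumr.
rewrite exchange_big /=; apply: eq_bigr => kk _.
under eq_bigr do rewrite scaler_sumr.
rewrite exchange_big /=; apply: eq_bigr => l _.
rewrite scaler_suml; apply: eq_bigr => c _; by rewrite scalerA.
Qed.


Hypothesis H1 : forall (v : 'I_3 -> RR) l,
  \sum_c eta c * (\sum_kk (\sum_b v b * f c b kk) * f c kk l) = -2 * lam * v l.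
Hypothesis H2 : forall (v w : 'I_3 -> RR) kk l,
  \sum_c eta c * ((\sum_b v b * f c b kk) * (\sum_d w d * f c d l)) =
  lam * ((\sum_a eta a * v a * w a) * eta kk * (kk == l)%:R - w kk * v l).
Hypothesis H3 : forall a kk l, eta l * f a l kk + eta kk * f a kk l = 0.

Lemma Omega z : z \in g -> \sum_c eta c *: lbr (u c) (lbr (u c) z) = (-2 * lam) *: z.
Proof.
move=> hz; apply: eq_co.
- apply: rpred_sum => c _; apply: rpredZ; apply: lbr_g => //; exact: lbr_g.
- exact: rpredZ.
move=> l; rewrite co_sum coZ -(H1 (fun b => co b z) l); apply: eq_bigr => c _.
rewrite coZ (co_adu _ _ (lbr_g (u_g c) hz)); congr (_ * _).
apply: eq_bigr => kk _; by rewrite (co_adu _ _ hz).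
Qed.

Definition ip v w := \sum_a eta a * co a v * co a w.

Lemma sum_diag (a : 'I_3 -> RR) (P : 'I_3 -> 'I_3 -> M) :
  \sum_c a c *: P c c = \sum_kk \sum_l (a kk * (kk == l)%:R) *: P kk l.
Proof.
apply: eq_bigr => kk _; rewrite (bigD1 kk) //= eqxx mulr1 big1 ?addr0 // => l /negbTE.
by rewrite eq_sym => ->; rewrite mulr0 scale0r.
Qed.

Lemma sum2_lin al be (A B : 'I_3 -> 'I_3 -> RR) (P : 'I_3 -> 'I_3 -> M) :
  al *: (be *: (\sum_kk \sum_l A kk l *: P kk l) - \sum_kk \sum_l B kk l *: P kk l) =
  \sum_kk \sum_l (al * (be * A kk l - B kk l)) *: P kk l.
Proof.
rewrite scaler_sumr -sumrB scaler_sumr; apply: eq_bigr => kk _.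
rewrite scaler_sumr -sumrB scaler_sumr; apply: eq_bigr => l _.
by rewrite scalerA -scalerBl scalerA.
Qed.

Lemma cross (Phi : M -> M -> M) v w :
  (forall q, q \in g -> linG (fun p => Phi p q)) -> (forall p, p \in g -> linG (Phi p)) ->
  v \in g -> w \in g ->
  \sum_c eta c *: Phi (lbr (u c) v) (lbr (u c) w) =
  lam *: (ip v w *: \sum_c eta c *: Phi (u c) (u c) - Phi w v).
Proof.
move=> hL hR hv hw.
under eq_bigr => c _ do rewrite (Phi_expand hL hR (lbr_g (u_g c) hv) (lbr_g (u_g c) hw)).
rewrite sum_norm (Phi_expand hL hR hw hv) (sum_diag eta (fun kk l => Phi (u kk) (u l))) sum2_lin.
apply: eq_bigr => kk _; apply: eq_bigr => l _; congr (_ *: _).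
have := H2 (fun b => co b v) (fun b => co b w) kk l; rewrite /= mulrA => <-.
by apply: eq_bigr => c _; rewrite (co_adu _ _ hv) (co_adu _ _ hw).
Qed.


Lemma cas_inv (Phi : M -> M -> M) z :
  (forall q, q \in g -> linG (fun p => Phi p q)) -> (forall p, p \in g -> linG (Phi p)) ->
  z \in g ->
  \sum_c eta c *: (Phi (lbr z (u c)) (u c) + Phi (u c) (lbr z (u c))) = 0.
Proof.
move=> hL hR hz.
have E : forall c, Phi (lbr z (u c)) (u c) + Phi (u c) (lbr z (u c)) =
  \sum_kk \sum_l (co kk (lbr z (u c)) * co l (u c) + co kk (u c) * co l (lbr z (u c))) *: Phi (u kk) (u l).
  move=> c; rewrite (Phi_expand hL hR (lbr_g hz (u_g c)) (u_g c)) (Phi_expand hL hR (u_g c) (lbr_g hz (u_g c))).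
  rewrite -big_split; apply: eq_bigr => kk _ /=; rewrite -big_split; apply: eq_bigr => l _ /=.
  by rewrite scalerDl.
under eq_bigr => c _ do rewrite E.
rewrite sum_norm big1 // => kk _; rewrite big1 // => l _.
suff -> : \sum_c eta c * (co kk (lbr z (u c)) * co l (u c) + co kk (u c) * co l (lbr z (u c))) = 0 by rewrite scale0r.
under eq_bigr => c _ do rewrite !co_u mulrDr.
rewrite big_split /=.
have -> : \sum_c eta c * (co kk (lbr z (u c)) * (l == c)%:R) = \sum_c (eta c * co kk (lbr z (u c))) * (l == c)%:R.
  by apply: eq_bigr => c _; rewrite mulrA.
have -> : \sum_c eta c * ((kk == c)%:R * co l (lbr z (u c))) = \sum_c (eta c * co l (lbr z (u c))) * (kk == c)%:R.
  by apply: eq_bigr => c _; rewrite mulrCA mulrC.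
rewrite !sum_delta !(co_uad _ _ hz) !mulr_sumr -big_split big1 // => b _ /=.
by rewrite mulrCA [eta kk * _]mulrCA -mulrDr H3 mulr0.
Qed.


Lemma cnt_ne (V : zmodType) m (i : 'I_m) (c : V) : \sum_(j < m | j != i) c = c *+ m - c.
Proof.
have e : \sum_(j < m) c = c *+ m by rewrite sumr_const card_ord.
by rewrite (bigD1 i) //= in e; rewrite -e addrC addrK.
Qed.

Lemma slot_lin m (F : ('I_m -> M) -> M) x i : inS g F -> in_g g x -> linG (fun v => F (upd x i v)).
Proof. by case=> _ Hl _ _ hx al y z hy hz; exact: Hl. Qed.

Lemma two_linL m (F : ('I_m -> M) -> M) x i j : inS g F -> in_g g x -> i != j ->
  forall q, q \in g -> linG (fun p => F (upd (upd x i p) j q)).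
Proof.
move=> hF hx hij q hq al y z hy hz /=; rewrite !(upd_comm _ _ _ hij).
exact: (slot_lin i hF (in_g_upd j hx hq)).
Qed.
Lemma two_linR m (F : ('I_m -> M) -> M) x i j : inS g F -> in_g g x ->
  forall p, p \in g -> linG (fun q => F (upd (upd x i p) j q)).
Proof. move=> hF hx p hp; exact: (slot_lin j hF (in_g_upd i hx hp)). Qed.

Definition Con m (F : ('I_m -> M) -> M) x i j := \sum_c eta c *: F (upd (upd x i (u c)) j (u c)).

Lemma casimir m (F : ('I_m -> M) -> M) x : inS g F -> in_g g x ->
  (lam * (m%:R ^+ 2 + m%:R - 2)) *: F x =
  lam *: \sum_i \sum_(j | j != i) ip (x i) (x j) *: Con F x i j.
Proof.
move=> hF hx; have [Hg Hl Hs Hi] := hF.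
have Fxg := Hg x hx.
have S1 := Omega Fxg.
have S2 : forall c, lbr (u c) (lbr (u c) (F x)) =
   \sum_i (F (upd x i (lbr (u c) (lbr (u c) (x i)))) +
     \sum_(j | j != i) F (upd (upd x i (lbr (u c) (x i))) j (lbr (u c) (x j)))).
  move=> c; rewrite (Hi _ _ (u_g c) hx) lbr_sumr; apply: eq_bigr => i _.
  rewrite (Hi _ _ (u_g c) (in_g_upd i hx (lbr_g (u_g c) (hx i)))) (bigD1 i) //= upd_same upd_upd_same.
  congr (_ + _); apply: eq_bigr => j hj; by rewrite upd_other.
have D : forall i, \sum_c eta c *: F (upd x i (lbr (u c) (lbr (u c) (x i)))) = (-2 * lam) *: F x.
  move=> i.
  have hv : forall c, lbr (u c) (lbr (u c) (x i)) \in g.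
    by move=> c; apply: lbr_g => //; exact: lbr_g.
  have := @linG_sum _ _ (index_enum 'I_3) eta (fun c => lbr (u c) (lbr (u c) (x i))) (slot_lin i hF hx) hv.
  move=> /= <-.
  rewrite Omega // (linGZ _ (slot_lin i hF hx) (hx i)) /= upd_id //.
have X : forall i j, j != i ->
   \sum_c eta c *: F (upd (upd x i (lbr (u c) (x i))) j (lbr (u c) (x j))) =
   lam *: (ip (x i) (x j) *: Con F x i j - F x).
  move=> i j hji; have hij : i != j by rewrite eq_sym.
  have := @cross (fun p q => F (upd (upd x i p) j q)) (x i) (x j) (two_linL hF hx hij) (two_linR i j hF hx) (hx i) (hx j).
  move=> /= ->; by rewrite upd_swap // Hs.
move: S1; under eq_bigr => c _ do rewrite S2 scaler_sumr.
rewrite exchange_big /=.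
have E : forall i, \sum_c eta c *: (F (upd x i (lbr (u c) (lbr (u c) (x i)))) +
     \sum_(j | j != i) F (upd (upd x i (lbr (u c) (x i))) j (lbr (u c) (x j)))) =
   (-2 * lam) *: F x + (lam *: \sum_(j | j != i) ip (x i) (x j) *: Con F x i j - (lam *: F x *+ m - lam *: F x)).
  move=> i; under eq_bigr do rewrite scalerDr.
  rewrite big_split /= D; congr (_ + _).
  under eq_bigr do rewrite scaler_sumr.
  rewrite exchange_big /= -(cnt_ne i) scaler_sumr -sumrB; apply: eq_bigr => j hj.
  by rewrite X // scalerBr.
under eq_bigr do rewrite E.
rewrite big_split /= sumrB sumr_const card_ord -scaler_sumr sumr_const card_ord -!scaler_nat.
move: (\sum_(i < m) \sum_(j < m | j != i) ip (x i) (x j) *: Con F x i j) => T h.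
apply/matrixP => r s; move/matrixP: h => /(_ r s).
rewrite !mxE => h.
apply/eqP; rewrite -subr_eq0; apply/eqP.
move: h; set A := F x r s; set B := T r s => h.
transitivity (- ((m%:R * (-2 * lam * A) + (lam * B - m%:R * (m%:R * (lam * A) - lam * A))) - -2 * lam * A)).
  ring.
by rewrite h subrr oppr0.
Qed.


Definition Cn m (F : ('I_m.+2 -> M) -> M) (y : 'I_m -> M) := \sum_c eta c *: F (ext y (u c) (u c)).

Lemma ext_lin0 m (F : ('I_m.+2 -> M) -> M) y q : inS g F -> in_g g y -> q \in g ->
  linG (fun p => F (ext y p q)).
Proof.
move=> hF hy hq al v w hv hw /=; rewrite -(upd_ext0 y 0 q (al *: v + w)) -(upd_ext0 y 0 q v) -(upd_ext0 y 0 q w).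
exact: (slot_lin ord0 hF (ext_in_g hy (mem0v g) hq)).
Qed.
Lemma ext_lin1 m (F : ('I_m.+2 -> M) -> M) y p : inS g F -> in_g g y -> p \in g ->
  linG (fun q => F (ext y p q)).
Proof.
move=> hF hy hp al v w hv hw /=; rewrite -(upd_ext1 y p 0 (al *: v + w)) -(upd_ext1 y p 0 v) -(upd_ext1 y p 0 w).
exact: (slot_lin _ hF (ext_in_g hy hp (mem0v g))).
Qed.

Lemma inS_Cn m (F : ('I_m.+2 -> M) -> M) : inS g F -> inS g (Cn F).
Proof.
move=> hF; have [Hg Hl Hs Hi] := hF; split.
- move=> y hy; apply: rpred_sum => c _; apply: rpredZ; apply: Hg; exact: ext_in_g.
- move=> y i a v w hy hv hw; rewrite /Cn.
  have E : forall c, eta c *: F (ext (upd y i (a *: v + w)) (u c) (u c)) =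
     a *: (eta c *: F (ext (upd y i v) (u c) (u c))) + eta c *: F (ext (upd y i w) (u c) (u c)).
    move=> c; rewrite !ext_upd (Hl _ _ _ _ _ (ext_in_g hy (u_g _) (u_g _)) hv hw) scalerDr !scalerA.
    by rewrite mulrC.
  by rewrite (eq_bigr _ (fun c _ => E c)) big_split /= -scaler_sumr.
- move=> y s hy; rewrite /Cn; apply: eq_bigr => c _.
  by rewrite ext_perm Hs //; apply: ext_in_g.
- move=> z y hz hy; rewrite /Cn lbr_sumr.
  have E : forall c, lbr z (eta c *: F (ext y (u c) (u c))) =
      eta c *: (F (ext y (lbr z (u c)) (u c)) + F (ext y (u c) (lbr z (u c)))) +
      eta c *: \sum_i F (ext (upd y i (lbr z (y i))) (u c) (u c)).
    move=> c; rewrite lbrZr (Hi _ _ hz (ext_in_g hy (u_g c) (u_g c))) !big_ord_recl.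
    rewrite ext0 upd_ext0 ext1 upd_ext1 addrA scalerDr; congr (_ + _ *: _).
    by apply: eq_bigr => i _; rewrite extL upd_extL.
  rewrite (eq_bigr _ (fun c _ => E c)) big_split /=.
  have -> : \sum_c eta c *: (F (ext y (lbr z (u c)) (u c)) + F (ext y (u c) (lbr z (u c)))) = 0.
    by apply: (@cas_inv (fun p q => F (ext y p q)) z) => // [q hq|p hp]; [exact: ext_lin0 | exact: ext_lin1].
  rewrite add0r; under eq_bigr do rewrite scaler_sumr.
  by rewrite exchange_big.
Qed.


Lemma reduce m (x : 'I_m.+2 -> M) i j : i != j -> in_g g x ->
  exists y, in_g g y /\ forall F, inS g F -> Con F x i j = Cn F y.
Proof.
move=> hij hx.
pose j' := tperm i ord0 j.
pose s : 'S_m.+2 := (tperm i ord0 * tperm j' (ord1' m))%g.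
have hj' : j' != ord0.
  apply/eqP => h; move: hij; have : tperm i ord0 j' = tperm i ord0 ord0 by rewrite h.
  by rewrite /j' tpermK tpermR => ->; rewrite eqxx.
have si : s i = ord0 by rewrite permM tpermL tpermD // eq_sym.
have sj : s j = ord1' m by rewrite permM -/j' tpermL.
pose y t := x ((s^-1)%g (lift ord0 (lift ord0 t))).
exists y; split; first by move=> t; exact: hx.
move=> F hF; rewrite /Con /Cn; apply: eq_bigr => c _; congr (_ *: _).
have E : (fun t => ext y (u c) (u c) (s t)) = upd (upd x i (u c)) j (u c).
  apply: functional_extensionality => t.
  case: (eqVneq t j) => [->|htj]; first by rewrite sj ext1 upd_same.
  rewrite upd_other //; case: (eqVneq t i) => [->|hti]; first by rewrite si ext0 upd_same.
  rewrite upd_other //; case: (ext_cases (s t)) => [h|h|[t' h]].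
  - by move: hti; rewrite -si in h; rewrite (perm_inj h) eqxx.
  - by move: htj; rewrite -sj in h; rewrite (perm_inj h) eqxx.
  - by rewrite h extL /y -h permK.
have [_ _ Hs _] := hF.
by rewrite -E Hs //; apply: ext_in_g => // t; exact: hx.
Qed.

Hypothesis H5 : forall a (v : 'I_3 -> RR), (forall kk, \sum_b v b * f a b kk = 0) -> forall b, b != a -> v b = 0.
Hypothesis H6 : forall a b, a != b -> exists c, f a b c != 0.
Hypothesis lam0 : lam != 0.

Lemma centr a z : z \in g -> lbr (u a) z = 0 -> z = co a z *: u a.
Proof.
move=> hz h0.
have hv : forall b, b != a -> co b z = 0.
  apply: (H5 (v := fun b => co b z)) => kk; by rewrite -co_adu // h0 co0.
rewrite {1}(dec hz) (bigD1 a) //= big1 ?addr0 // => b hb; by rewrite hv // scale0r.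
Qed.

Lemma ord1_eq (t : 'I_1) : t = ord0.
Proof. by apply: val_inj; case: t => [[|n]]. Qed.

Lemma S1 (F : ('I_1 -> M) -> M) : inS g F -> exists cF, forall x, in_g g x -> F x = cF *: x ord0.
Proof.
case=> Hg Hl Hs Hi.
pose F1 v := F (fun _ => v).
have Fx : forall x : 'I_1 -> M, x = (fun _ : 'I_1 => x ord0).
  by move=> x; apply: functional_extensionality => t; rewrite (ord1_eq t).
have updc : forall (v w : M) (i : 'I_1), upd (fun _ : 'I_1 => v) i w = (fun _ : 'I_1 => w).
  move=> v w i; rewrite /upd; apply: functional_extensionality => t; by rewrite (ord1_eq t) (ord1_eq i) eqxx.
have h0 : in_g g (fun _ : 'I_1 => (0 : M)) by move=> t; exact: mem0v.
have lin : linG F1.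
  move=> al v w hv hw; have := Hl _ ord0 al v w h0 hv hw; by rewrite !updc.
have inv : forall y v, y \in g -> v \in g -> lbr y (F1 v) = F1 (lbr y v).
  move=> y v hy hv; rewrite /F1 (Hi y (fun _ => v)) // ?big_ord1 ?updc //.
have F1g : forall v, v \in g -> F1 v \in g by move=> v hv; apply: Hg.
pose la a := co a (F1 (u a)).
have ev : forall a, F1 (u a) = la a *: u a.
  move=> a; apply: centr; first exact: F1g.
  by rewrite inv // lbrxx (linG0 lin).
have eq : forall a b, la a = la b.
  move=> a b; case: (eqVneq a b) => [->//|hab].
  have [c hc] := H6 hab.
  have e1 : F1 (lbr (u a) (u b)) = la b *: lbr (u a) (u b) by rewrite -inv // ev lbrZr.
  have e2 : F1 (lbr (u a) (u b)) = la a *: lbr (u a) (u b).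
    rewrite lbrC -scaleN1r (linGZ _ lin (br_g b a)) -inv // ev lbrZr lbrC.
    by rewrite !scaleN1r !scalerN !opprK.
  have := congr1 (co c) (etrans (esym e1) e2); rewrite !coZ br co_dec => h.
  by apply: (mulIf hc); rewrite h.
exists (la ord0) => x hx.
have -> : F x = F1 (x ord0) by rewrite /F1 -Fx.
rewrite (dec (hx ord0)) (linG_sum _ _ lin u_g) scaler_sumr; apply: eq_bigr => a _.
by rewrite ev scalerA mulrC (eq a ord0) scalerA.
Qed.

Lemma coef_neq N : (2 <= N)%N -> (lam * (N%:R ^+ 2 + N%:R - 2) : RR) != 0.
Proof.
move=> hN; rewrite mulf_eq0 negb_or lam0 /=.
have h : (2%:R : RR) <= N%:R by rewrite ler_nat.
apply/negP => /eqP h2; nra.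
Qed.

Theorem main_ind n :
  (forall F : ('I_(n.*2) -> M) -> M, inS g F -> forall x, in_g g x -> F x = 0) /\
  (forall F G : ('I_(n.*2.+1) -> M) -> M, inS g F -> inS g G -> (exists2 x0, in_g g x0 & G x0 != 0) ->
     exists c, forall x, in_g g x -> F x = c *: G x).
Proof.
elim: n => [|n [IHe IHo]]; split.
- move=> F hF x hx; have := casimir hF hx; rewrite big_ord0 scaler0 => /eqP.
  rewrite scaler_eq0 => /orP [|/eqP //].
  rewrite mulf_eq0 (negbTE lam0) /= => /eqP h; exfalso; move: h.
  have -> : (0.*2%:R : RR) = 0 by [].
  rewrite expr2 mul0r add0r sub0r => /eqP; rewrite oppr_eq0 => /eqP h; lra.
- move=> F G hF hG [x0 hx0 hG0].
  have [cF eF] := S1 hF; have [cG eG] := S1 hG.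
  have hcG : cG != 0 by apply: contraNneq hG0 => e; rewrite eG // e scale0r.
  exists (cF / cG) => x hx; by rewrite eF // eG // scalerA divfK.
- move=> F hF x hx; have := casimir hF hx.
  rewrite big1 ?scaler0.
    move=> /eqP; rewrite scaler_eq0 => /orP [h|/eqP //]; exfalso.
    by move: h; apply/negP; apply: (coef_neq (N := (n.+1).*2)).
  move=> i _; rewrite big1 // => j hj.
  have hij : i != j by rewrite eq_sym.
  have [y [hy ey]] := reduce hij hx.
  by rewrite ey // (IHe _ (inS_Cn hF)) // scaler0.
- move=> F G hF hG [x0 hx0 hGx0].
  have nz : exists2 y0, in_g g y0 & Cn G y0 != 0.
    case: (classic (exists2 y0, in_g g y0 & Cn G y0 != 0)) => // hn; exfalso.
    have z : forall y, in_g g y -> Cn G y = 0.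
      move=> y hy; case: (eqVneq (Cn G y) 0) => // hne; exfalso; apply: hn; by exists y.
    move: hGx0; apply/negP; rewrite negbK.
    have := casimir hG hx0; rewrite big1 ?scaler0.
      move=> /eqP; rewrite scaler_eq0 => /orP [h|//]; exfalso.
      by move: h; apply/negP; apply: (coef_neq (N := (n.+1).*2.+1)).
    move=> i _; rewrite big1 // => j hj.
    have hij : i != j by rewrite eq_sym.
  have [y [hy ey]] := reduce hij hx0.
    by rewrite ey // z // scaler0.
  have [c hc] := IHo _ _ (inS_Cn hF) (inS_Cn hG) nz.
  exists c => x hx; apply: (scalerI (coef_neq (N := (n.+1).*2.+1) isT)).
  rewrite (casimir hF hx) scalerA [_ * c]mulrC -scalerA (casimir hG hx).
  rewrite scalerA mulrC -scalerA; congr (lam *: _); rewrite scaler_sumr; apply: eq_bigr => i _.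
  rewrite scaler_sumr; apply: eq_bigr => j hj.
  have hij : i != j by rewrite eq_sym.
  have [y [hy ey]] := reduce hij hx.
  by rewrite !ey // hc // scalerA mulrC -scalerA.
Qed.

End Gen.

Section KF.
Variable k : nat.
Notation M := 'M[RR]_k.
Variable g : {vspace M}.

Definition bb (i : 'I_(\dim g)) := tnth (vbasis g) i.
Lemma bb_g i : bb i \in g.
Proof. by apply: vbasis_mem; rewrite /bb mem_tnth. Qed.
Lemma vdec v : v \in g -> v = \sum_i coord (vbasis g) i v *: bb i.
Proof. move=> hv; rewrite {1}(coord_vbasis hv); apply: eq_bigr => i _; by rewrite /bb (tnth_nth 0). Qed.

Lemma vtr_lin (F G : M -> M) a : vtr g (fun z => a *: F z + G z) = a * vtr g F + vtr g G.
Proof. rewrite /vtr mulr_sumr -big_split; apply: eq_bigr => i _; by rewrite linearD linearZ. Qed.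
Lemma vtr_sub (F G : M -> M) : vtr g (fun z => F z - G z) = vtr g F - vtr g G.
Proof. rewrite /vtr -sumrB; apply: eq_bigr => i _; by rewrite linearB. Qed.
Lemma vtr_ext (F G : M -> M) : (forall v, v \in g -> F v = G v) -> vtr g F = vtr g G.
Proof. move=> h; rewrite /vtr; apply: eq_bigr => i _; by rewrite h // -/(bb i) bb_g. Qed.

Lemma linG_lbr x : linG g (lbr x).
Proof. move=> a y z _ _; exact: lbrDr. Qed.

Lemma vtr_comm (A B : M -> M) : linG g A -> linG g B -> (forall v, v \in g -> A v \in g) ->
  (forall v, v \in g -> B v \in g) -> vtr g (fun z => A (B z)) = vtr g (fun z => B (A z)).
Proof.
move=> lA lB gA gB.
have E : forall (A B : M -> M), linG g A -> (forall v, v \in g -> B v \in g) ->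
   vtr g (fun z => A (B z)) = \sum_i \sum_j coord (vbasis g) j (B (bb i)) * coord (vbasis g) i (A (bb j)).
  move=> A' B' lA' gB'; rewrite /vtr; apply: eq_bigr => i _.
  rewrite -/(bb i) {1}(vdec (gB' _ (bb_g i))) (linG_sum _ _ lA' bb_g) linear_sum.
  by apply: eq_bigr => j _; rewrite linearZ.
rewrite (E A B lA gB) (E B A lB gA) exchange_big /=; apply: eq_bigr => i _; apply: eq_bigr => j _.
by rewrite mulrC.
Qed.

Lemma kformDl (x y z : M) a : kform g (a *: x + y) z = a * kform g x z + kform g y z.
Proof.
rewrite /kform (_ : vtr g _ = vtr g (fun w => a *: lbr x (lbr z w) + lbr y (lbr z w))).
  by rewrite vtr_lin mulrDr mulrCA.
by apply: vtr_ext => v _; rewrite lbrDl.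
Qed.
Lemma kformDr (x y z : M) a : kform g x (a *: y + z) = a * kform g x y + kform g x z.
Proof.
rewrite /kform (_ : vtr g _ = vtr g (fun w => a *: lbr x (lbr y w) + lbr x (lbr z w))).
  by rewrite vtr_lin mulrDr mulrCA.
by apply: vtr_ext => v _; rewrite lbrDl lbrDr.
Qed.

Section WithLie.
Hypothesis br_closed : forall x y, x \in g -> y \in g -> lbr x y \in g.

Lemma kform_sym x y : x \in g -> y \in g -> kform g x y = kform g y x.
Proof.
move=> hx hy; rewrite /kform (vtr_comm (linG_lbr x) (linG_lbr y)) // => v hv; exact: br_closed.
Qed.

Lemma lbrBr (x p q : M) : lbr x (p - q) = lbr x p - lbr x q.
Proof. by rewrite -scaleN1r addrC lbrDr scaleN1r addrC. Qed.

Lemma kform_inv y a b : y \in g -> a \in g -> b \in g -> kform g (lbr y a) b + kform g a (lbr y b) = 0.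
Proof.
move=> hy ha hb; rewrite /kform -mulrDr.
rewrite (_ : vtr g (fun z => lbr (lbr y a) (lbr b z)) =
   vtr g (fun z => lbr y (lbr a (lbr b z)) - lbr a (lbr y (lbr b z)))); last first.
  by apply: vtr_ext => v _; rewrite jacobi.
rewrite (_ : vtr g (fun z => lbr a (lbr (lbr y b) z)) =
   vtr g (fun z => lbr a (lbr y (lbr b z)) - lbr a (lbr b (lbr y z)))); last first.
  by apply: vtr_ext => v _; rewrite jacobi lbrBr.
rewrite (vtr_sub (fun z => lbr y (lbr a (lbr b z))) (fun z => lbr a (lbr y (lbr b z)))).
rewrite (vtr_sub (fun z => lbr a (lbr y (lbr b z))) (fun z => lbr a (lbr b (lbr y z)))) addrA subrK.
have e := @vtr_comm (lbr y) (fun z => lbr a (lbr b z)) (linG_lbr y).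
rewrite /= in e; rewrite e ?subrr ?mulr0 //.
- move=> al p q hp hq /=; by rewrite lbrDr lbrDr.
- move=> v hv; exact: br_closed.
- move=> v hv; apply: br_closed => //; exact: br_closed.
Qed.
End WithLie.
End KF.

Section PB.
Variable k : nat.
Notation M := 'M[RR]_k.
Variable g : {vspace M}.
Hypothesis br_closed : forall x y, x \in g -> y \in g -> lbr x y \in g.

Lemma pidx_inj n (j j' : 'I_n) b b' : pidx j b = pidx j' b' -> j = j' /\ b = b'.
Proof.
move=> /(congr1 val) /= h.
have hb : b = b' by move: (congr1 odd h); rewrite !oddD !odd_double; case: (b); case: (b').
subst b'; split => //; apply: val_inj => /=; move: h; case: (b) => /= h; lia.
Qed.
Lemma pidx_neq n (j j' : 'I_n) b b' : j != j' -> pidx j b != pidx j' b'.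
Proof. move=> hj; apply/eqP => /pidx_inj [e _]; by rewrite e eqxx in hj. Qed.
Lemma pidx_neqb n (j : 'I_n) b : pidx j b != pidx j (~~ b).
Proof. apply/eqP => /pidx_inj [_]; by case: b. Qed.

Lemma pidx_surj n (t : 'I_(n.*2)) : exists j b, t = pidx j b.
Proof.
have ht : (t./2 < n)%N by rewrite ltn_half_double.
exists (Ordinal ht), (odd t); apply: val_inj => /=.
by rewrite -[LHS]odd_double_half addnC.
Qed.

Lemma sum_pidx (V : zmodType) n (F : 'I_(n.*2) -> V) :
  \sum_t F t = \sum_(j < n) (F (pidx j false) + F (pidx j true)).
Proof.
pose h (p : 'I_n * bool) := pidx p.1 p.2.
have hinv : forall t : 'I_(n.*2), (t./2 < n)%N by move=> t; rewrite ltn_half_double.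
pose h' (t : 'I_(n.*2)) := (Ordinal (hinv t), odd t).
have c1 : cancel h h'.
  move=> [j b]; rewrite /h /h'; congr (_, _).
  - by apply: val_inj => /=; rewrite addnC half_bit_double.
  - by rewrite /= oddD odd_double; case: b.
have c2 : cancel h' h.
  move=> t; apply: val_inj; rewrite /h /h' /=; by rewrite -[RHS]odd_double_half addnC.
rewrite (reindex h (onW_bij _ (Bijective c1 c2))) /=.
rewrite -(pair_big xpredT xpredT (fun j b => F (h (j, b)))) /=.
by apply: eq_bigr => j _; rewrite big_bool addrC.
Qed.

Definition hprod n (y : 'I_(n.*2) -> M) := \prod_(j < n) kform g (y (pidx j false)) (y (pidx j true)).

Lemma hprod_rest n (y : 'I_(n.*2) -> M) j0 b0 V :
  \prod_(j < n | j != j0) kform g (upd y (pidx j0 b0) V (pidx j false)) (upd y (pidx j0 b0) V (pidx j true)) =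
  \prod_(j < n | j != j0) kform g (y (pidx j false)) (y (pidx j true)).
Proof. apply: eq_bigr => j hj; by rewrite !upd_other // pidx_neq. Qed.

Lemma hprod_split n (y : 'I_(n.*2) -> M) j0 b0 V :
  hprod (upd y (pidx j0 b0) V) =
  (if b0 then kform g (y (pidx j0 false)) V else kform g V (y (pidx j0 true))) *
  \prod_(j < n | j != j0) kform g (y (pidx j false)) (y (pidx j true)).
Proof.
rewrite /hprod (bigD1 j0) //= hprod_rest; congr (_ * _).
case: b0; rewrite upd_same upd_other //.
- by have := pidx_neqb j0 false.
- by have := pidx_neqb j0 true.
Qed.

Lemma hprod_lin n (y : 'I_(n.*2) -> M) t a v w :
  hprod (upd y t (a *: v + w)) = a * hprod (upd y t v) + hprod (upd y t w).
Proof.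
have [j0 [b0 ->]] := pidx_surj t.
rewrite !hprod_split; case: b0; rewrite ?kformDr ?kformDl; by rewrite mulrDl mulrA.
Qed.

Lemma hprod_der n (y : 'I_(n.*2) -> M) (D : M -> M) :
  (forall p q, p \in g -> q \in g -> kform g (D p) q + kform g p (D q) = 0) -> in_g g y ->
  \sum_t hprod (upd y t (D (y t))) = 0.
Proof.
move=> hD hy; rewrite sum_pidx big1 // => j _.
by rewrite !hprod_split -mulrDl hD ?mulr0 ?mul0r.
Qed.

Lemma upd_perm m (x : 'I_m -> M) (s : 'S_m) i V :
  (fun t => upd x i V (s t)) = upd (fun t => x (s t)) ((s^-1)%g i) V.
Proof.
apply: functional_extensionality => t; rewrite /upd.
case: (eqVneq (s t) i) => [e|ne]; first by rewrite -e permK eqxx.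
have -> : (t == (s^-1)%g i) = false.
  apply/negbTE; apply: contra_neq ne => ->; by rewrite permKV.
by [].
Qed.

Lemma Pn_hprod n (x : 'I_(n.*2) -> M) :
  Pn g n x = ((n.*2)`!%:R)^-1 * \sum_(s : 'S_(n.*2)) hprod (fun t => x (s t)).
Proof. by []. Qed.

Lemma Pn_lin n (x : 'I_(n.*2) -> M) i a v w :
  Pn g n (upd x i (a *: v + w)) = a * Pn g n (upd x i v) + Pn g n (upd x i w).
Proof.
rewrite !Pn_hprod.
under eq_bigr => s _ do rewrite upd_perm hprod_lin -!upd_perm.
by rewrite big_split /= -mulr_sumr mulrDr mulrCA.
Qed.

Lemma Pn_sym n (x : 'I_(n.*2) -> M) (tau : 'S_(n.*2)) : Pn g n (fun t => x (tau t)) = Pn g n x.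
Proof.
rewrite !Pn_hprod [in RHS](reindex_inj (mulIg tau)) /=; congr (_ * _).
apply: eq_bigr => s _; rewrite /hprod; apply: eq_bigr => j _; by rewrite !permM.
Qed.

Lemma Pn_der n (x : 'I_(n.*2) -> M) (D : M -> M) :
  (forall p q, p \in g -> q \in g -> kform g (D p) q + kform g p (D q) = 0) -> in_g g x ->
  \sum_t Pn g n (upd x t (D (x t))) = 0.
Proof.
move=> hD hx.
under eq_bigr => t _ do rewrite Pn_hprod.
rewrite -mulr_sumr exchange_big /= big1 ?mulr0 // => s _.
rewrite (reindex_inj (@perm_inj _ s)) /=.
under eq_bigr => t _ do rewrite upd_perm permK.
exact: (hprod_der hD (fun t => hx (s t))).
Qed.

Lemma upd_lift n (x : 'I_n.+1 -> M) i' t V :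
  (fun j => upd x (lift i' t) V (lift i' j)) = upd (fun j => x (lift i' j)) t V.
Proof. apply: functional_extensionality => j; by rewrite /upd (inj_eq (@lift_inj _ i')). Qed.
Lemma upd_lift_same n (x : 'I_n.+1 -> M) i V :
  (fun j => upd x i V (lift i j)) = (fun j => x (lift i j)).
Proof. apply: functional_extensionality => j; by rewrite upd_other // eq_sym neq_lift. Qed.

Lemma Bn_in n x : in_g g x -> Bn g n x \in g.
Proof. move=> hx; apply: rpred_sum => i _; exact: rpredZ. Qed.

Lemma Bn_lin n x i a v w : Bn g n (upd x i (a *: v + w)) = a *: Bn g n (upd x i v) + Bn g n (upd x i w).
Proof.
rewrite /Bn scaler_sumr -big_split; apply: eq_bigr => i' _ /=.
case: (eqVneq i' i) => [->|hne].
  by rewrite !upd_lift_same !upd_same scalerDr !scalerA mulrC.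
case: (unliftP i' i) => [t e|e]; last by rewrite e eqxx in hne.
rewrite e !upd_lift !upd_other ?neq_lift // Pn_lin scalerDl scalerA.
by [].
Qed.

Lemma Bn_sym n x (sg : 'S_(n.*2.+1)) : Bn g n (fun j => x (sg j)) = Bn g n x.
Proof.
rewrite /Bn [in RHS](reindex_inj (@perm_inj _ sg)) /=; apply: eq_bigr => i _; congr (_ *: _).
pose tf (j : 'I_(n.*2)) := odflt j (unlift (sg i) (sg (lift i j))).
have ht : forall j, lift (sg i) (tf j) = sg (lift i j).
  move=> j; rewrite /tf; case: (unliftP (sg i) (sg (lift i j))) => [j' -> //|e].
  by move/perm_inj: e => /eqP; rewrite eq_sym (negbTE (neq_lift _ _)).
have tinj : injective tf.
  move=> j1 j2 e; apply: (@lift_inj _ i); apply: (@perm_inj _ sg); by rewrite -!ht e.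
have -> : (fun j => x (sg (lift i j))) = (fun j => (fun j' => x (lift (sg i) j')) (perm tinj j)).
  by apply: functional_extensionality => j; rewrite permE ht.
exact: Pn_sym.
Qed.

Lemma Bn_inv n y x : y \in g -> in_g g x ->
  lbr y (Bn g n x) = \sum_i Bn g n (upd x i (lbr y (x i))).
Proof.
move=> hy hx.
have E : forall i, Bn g n (upd x i (lbr y (x i))) = Pn g n (fun j => x (lift i j)) *: lbr y (x i) +
   \sum_(i' | i' != i) Pn g n (fun j => upd x i (lbr y (x i)) (lift i' j)) *: x i'.
  move=> i; rewrite /Bn (bigD1 i) //= upd_lift_same upd_same; congr (_ + _).
  by apply: eq_bigr => i' hi'; rewrite upd_other.
rewrite (eq_bigr _ (fun i _ => E i)) big_split /= /Bn lbr_sumr.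
have -> : \sum_i \sum_(i' | i' != i) Pn g n (fun j => upd x i (lbr y (x i)) (lift i' j)) *: x i' = 0.
  under eq_bigr do rewrite big_mkcond.
  rewrite exchange_big /= big1 // => i' _.
  have -> : \sum_i (if i' != i then Pn g n (fun j => upd x i (lbr y (x i)) (lift i' j)) *: x i' else 0) =
     (\sum_t Pn g n (upd (fun j => x (lift i' j)) t (lbr y (x (lift i' t))))) *: x i'.
    rewrite (bigD1_ord i') //= eqxx scaler_suml add0r; apply: eq_bigr => t _.
    by rewrite neq_lift upd_lift.
  have hD : forall p q, p \in g -> q \in g -> kform g (lbr y p) q + kform g p (lbr y q) = 0.
    by move=> p q hp hq; exact: kform_inv.
  by rewrite (Pn_der hD (fun j => hx _)) scale0r.
rewrite addr0; apply: eq_bigr => i _; by rewrite lbrZr.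
Qed.

Lemma inS_Bn n : inS g (Bn g n).
Proof.
split.
- move=> x hx; exact: Bn_in.
- move=> x i a v w _ _ _; exact: Bn_lin.
- move=> x s _; exact: Bn_sym.
- move=> y x hy hx; exact: Bn_inv.
Qed.

Lemma Pn_const n v : Pn g n (fun _ => v) = kform g v v ^+ n.
Proof.
rewrite /Pn; under eq_bigr do rewrite prodr_const card_ord.
rewrite sumr_const card_Sn -(mulr_natr (kform g v v ^+ n)) mulrCA mulVf ?mulr1 //.
by rewrite pnatr_eq0 -lt0n fact_gt0.
Qed.

Lemma Bn_const n v : Bn g n (fun _ => v) = ((n.*2.+1)%:R * kform g v v ^+ n) *: v.
Proof.
rewrite /Bn; under eq_bigr do rewrite Pn_const.
by rewrite sumr_const card_ord -scaler_nat scalerA.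
Qed.
End PB.

Section Fin.
Variable k : nat.
Notation M := 'M[RR]_k.
Variable g : {vspace M}.
Variable u : 'I_3 -> M.
Variable co : 'I_3 -> M -> RR.
Variable f : 'I_3 -> 'I_3 -> 'I_3 -> RR.
Variable eta : 'I_3 -> RR.
Variable lam : RR.
Hypothesis co_lin : forall a al x y, co a (al *: x + y) = al * co a x + co a y.
Hypothesis u_g : forall a, u a \in g.
Hypothesis dec : forall x, x \in g -> x = \sum_a co a x *: u a.
Hypothesis co_u : forall a b, co a (u b) = (a == b)%:R.
Hypothesis br : forall a b, lbr (u a) (u b) = \sum_c f a b c *: u c.
Hypothesis H1 : forall (v : 'I_3 -> RR) l,
  \sum_c eta c * (\sum_kk (\sum_b v b * f c b kk) * f c kk l) = -2 * lam * v l.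
Hypothesis H2 : forall (v w : 'I_3 -> RR) kk l,
  \sum_c eta c * ((\sum_b v b * f c b kk) * (\sum_d w d * f c d l)) =
  lam * ((\sum_a eta a * v a * w a) * eta kk * (kk == l)%:R - w kk * v l).
Hypothesis H3 : forall a kk l, eta l * f a l kk + eta kk * f a kk l = 0.
Hypothesis H5 : forall a (v : 'I_3 -> RR), (forall kk, \sum_b v b * f a b kk = 0) -> forall b, b != a -> v b = 0.
Hypothesis H6 : forall a b, a != b -> exists c, f a b c != 0.
Hypothesis lam0 : lam != 0.
Hypothesis HK : \sum_a \sum_kk f ord0 a kk * f ord0 kk a != 0.

Lemma brc x y : x \in g -> y \in g -> lbr x y \in g.
Proof. exact: (lbr_g u_g dec br). Qed.

Lemma vtr_u (F : M -> M) : linG g F -> (forall v, v \in g -> F v \in g) ->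
  vtr g F = \sum_a co a (F (u a)).
Proof.
move=> lF gF; rewrite /vtr.
have E : forall i, coord (vbasis g) i (F (tnth (vbasis g) i)) =
    \sum_a co a (tnth (vbasis g) i) * coord (vbasis g) i (F (u a)).
  move=> i; rewrite -/(bb i) {1}(dec (bb_g i)) (linG_sum _ _ lF u_g) linear_sum.
  by apply: eq_bigr => a _; rewrite linearZ.
rewrite (eq_bigr _ (fun i _ => E i)) exchange_big /=; apply: eq_bigr => a _.
rewrite {2}(vdec (gF _ (u_g a))) (co_sum co_lin); apply: eq_bigr => i _.
by rewrite (coZ co_lin) mulrC.
Qed.

Lemma kform_u0 : kform g (u ord0) (u ord0) = 2^-1 * \sum_a \sum_kk f ord0 a kk * f ord0 kk a.
Proof.
rewrite /kform vtr_u; last first.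
- move=> v hv; apply: brc => //; exact: brc.
- move=> al p q _ _; by rewrite lbrDr lbrDr.
congr (_ * _); apply: eq_bigr => a _.
rewrite (co_adu co_lin dec co_u br _ _ (br_g u_g br ord0 a)); apply: eq_bigr => kk _.
by rewrite br (co_dec co_lin co_u).
Qed.

Lemma Bn_u0 n : Bn g n (fun _ => u ord0) != 0.
Proof.
have h1 : ((n.*2.+1)%:R : RR) != 0 by rewrite pnatr_eq0.
have h2 : kform g (u ord0) (u ord0) != 0 by rewrite kform_u0 mulf_neq0 // invr_eq0 pnatr_eq0.
have h3 : u ord0 != 0.
  apply/eqP => h; have := co_u ord0 ord0; rewrite h (co0 co_lin) eqxx => /esym/eqP.
  by rewrite oner_eq0.
by rewrite Bn_const scaler_eq0 negb_or mulf_neq0 ?expf_neq0.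
Qed.

Theorem gen_cor n :
  (forall B : ('I_(n.*2) -> M) -> M, inS g B -> forall x, in_g g x -> B x = 0) /\
  (inS g (Bn g n) /\
   forall B : ('I_(n.*2.+1) -> M) -> M, inS g B -> exists c : RR, forall x, in_g g x -> B x = c *: Bn g n x).
Proof.
have [he ho] := main_ind co_lin u_g dec co_u br H1 H2 H3 H5 H6 lam0 n.
split; first exact: he.
have hB := inS_Bn brc n.
split; first exact: hB.
move=> B hBB; apply: (ho _ _ hBB hB); exists (fun _ => u ord0) => //.
exact: Bn_u0.
Qed.
End Fin.

Definition o30 : 'I_3 := ord0.
Definition o31 : 'I_3 := lift ord0 ord0.
Definition o32 : 'I_3 := lift ord0 (lift ord0 ord0).
Definition o20 : 'I_2 := ord0.
Definition o21 : 'I_2 := lift ord0 ord0.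

Lemma ord3_cases (a : 'I_3) : [\/ a = o30, a = o31 | a = o32].
Proof.
case: a => [[|[|[|a]]] Ha]; [apply: Or31|apply: Or32|apply: Or33|by []]; exact: val_inj.
Qed.
Lemma ord2_cases (a : 'I_2) : a = o20 \/ a = o21.
Proof.
case: a => [[|[|a]] Ha]; [left|right|by []]; exact: val_inj.
Qed.

Lemma sum3 (V : zmodType) (F : 'I_3 -> V) : \sum_a F a = F o30 + F o31 + F o32.
Proof. by rewrite !big_ord_recl big_ord0 addr0 addrA. Qed.
Lemma sum2 (V : zmodType) (F : 'I_2 -> V) : \sum_a F a = F o20 + F o21.
Proof. by rewrite !big_ord_recl big_ord0 addr0. Qed.

Definition nf (t : nat) (a b c : 'I_3) : RR :=
  match t with
  | 0 =>
    match nat_of_ord a, nat_of_ord b, nat_of_ord c with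
    | 0,1,2 => 2 | 0,2,1 => 2 | 1,0,2 => -2 | 1,2,0 => -2 | 2,0,1 => -2 | 2,1,0 => 2 | _,_,_ => 0 end
  | _ =>
    match nat_of_ord a, nat_of_ord b, nat_of_ord c with
    | 0,1,2 => 1 | 0,2,1 => -1 | 1,0,2 => -1 | 1,2,0 => 1 | 2,0,1 => 1 | 2,1,0 => -1 | _,_,_ => 0 end
  end.
Definition fsl := nf 0.
Definition fso := nf 1.
Definition etasl (a : 'I_3) : RR := match nat_of_ord a with 2 => -1 | _ => 1 end.
Definition etaso (a : 'I_3) : RR := 1.

Ltac c3 x := case: (ord3_cases x) => ->.

Lemma sl_H1 (v : 'I_3 -> RR) l :
  \sum_c etasl c * (\sum_kk (\sum_b v b * fsl c b kk) * fsl c kk l) = -2 * (-4) * v l.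
Proof. rewrite !sum3; c3 l; rewrite /fsl /fso /etasl /etaso /nf /o30 /o31 /o32 /=; ring. Qed.
Lemma so_H1 (v : 'I_3 -> RR) l :
  \sum_c etaso c * (\sum_kk (\sum_b v b * fso c b kk) * fso c kk l) = -2 * 1 * v l.
Proof. rewrite !sum3; c3 l; rewrite /fsl /fso /etasl /etaso /nf /o30 /o31 /o32 /=; ring. Qed.

Ltac unf := rewrite /fsl /fso /etasl /etaso /nf /o30 /o31 /o32 /o20 /o21 /=.
Ltac neq0 := apply/eqP => ?; lra.

Lemma sl_H2 (v w : 'I_3 -> RR) kk l :
  \sum_c etasl c * ((\sum_b v b * fsl c b kk) * (\sum_d w d * fsl c d l)) =
  (-4) * ((\sum_a etasl a * v a * w a) * etasl kk * (kk == l)%:R - w kk * v l).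
Proof. rewrite !sum3; c3 kk; c3 l; unf; ring. Qed.
Lemma so_H2 (v w : 'I_3 -> RR) kk l :
  \sum_c etaso c * ((\sum_b v b * fso c b kk) * (\sum_d w d * fso c d l)) =
  1 * ((\sum_a etaso a * v a * w a) * etaso kk * (kk == l)%:R - w kk * v l).
Proof. rewrite !sum3; c3 kk; c3 l; unf; ring. Qed.
Lemma sl_H3 a kk l : etasl l * fsl a l kk + etasl kk * fsl a kk l = 0.
Proof. c3 a; c3 kk; c3 l; unf; ring. Qed.
Lemma so_H3 a kk l : etaso l * fso a l kk + etaso kk * fso a kk l = 0.
Proof. c3 a; c3 kk; c3 l; unf; ring. Qed.

Lemma sl_H5 a (v : 'I_3 -> RR) : (forall kk, \sum_b v b * fsl a b kk = 0) -> forall b, b != a -> v b = 0.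
Proof.
move=> h b hb; move: (h o30) (h o31) (h o32) hb; rewrite !sum3.
c3 a; c3 b; unf; try done; move=> h0 h1 h2 _; lra.
Qed.
Lemma so_H5 a (v : 'I_3 -> RR) : (forall kk, \sum_b v b * fso a b kk = 0) -> forall b, b != a -> v b = 0.
Proof.
move=> h b hb; move: (h o30) (h o31) (h o32) hb; rewrite !sum3.
c3 a; c3 b; unf; try done; move=> h0 h1 h2 _; lra.
Qed.
Lemma sl_H6 a b : a != b -> exists c, fsl a b c != 0.
Proof.
c3 a; c3 b; unf; try done; move=> _;
 first [ (exists o30; unf; neq0) | (exists o31; unf; neq0) | (exists o32; unf; neq0) ].
Qed.
Lemma so_H6 a b : a != b -> exists c, fso a b c != 0.
Proof.
c3 a; c3 b; unf; try done; move=> _;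
 first [ (exists o30; unf; neq0) | (exists o31; unf; neq0) | (exists o32; unf; neq0) ].
Qed.
Lemma sl_HK : \sum_a \sum_kk fsl ord0 a kk * fsl ord0 kk a != 0.
Proof. rewrite !sum3; unf; neq0. Qed.
Lemma so_HK : \sum_a \sum_kk fso ord0 a kk * fso ord0 kk a != 0.
Proof. rewrite !sum3; unf; neq0. Qed.
Lemma sl_lam0 : (-4 : RR) != 0. Proof. neq0. Qed.
Lemma so_lam0 : (1 : RR) != 0. Proof. neq0. Qed.

Definition usl (a : 'I_3) : 'M[RR]_2 := \matrix_(i, j)
  (match nat_of_ord a, nat_of_ord i, nat_of_ord j with
   | 0,0,0 => 1 | 0,1,1 => -1 | 1,0,1 => 1 | 1,1,0 => 1 | 2,0,1 => 1 | 2,1,0 => -1 | _,_,_ => 0 end : RR).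
Definition cosl (a : 'I_3) (x : 'M[RR]_2) : RR :=
  match nat_of_ord a with
  | 0 => x o20 o20 | 1 => (x o20 o21 + x o21 o20) / 2 | _ => (x o20 o21 - x o21 o20) / 2 end.

Ltac c2 x := case: (ord2_cases x) => ->.

Lemma sl_co_lin a al (x y : 'M[RR]_2) : cosl a (al *: x + y) = al * cosl a x + cosl a y.
Proof. c3 a; rewrite /cosl /o30 /o31 /o32 /= !mxE; ring. Qed.

Lemma sl_u_g (g : {vspace 'M[RR]_2}) : (forall A : 'M[RR]_2, (A \in g) = (\tr A == 0)) -> forall a, usl a \in g.
Proof. move=> hg a; rewrite hg /mxtrace sum2 !mxE; c3 a; unf; apply/eqP; lra. Qed.

Lemma sl_dec (g : {vspace 'M[RR]_2}) : (forall A : 'M[RR]_2, (A \in g) = (\tr A == 0)) ->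
  forall x, x \in g -> x = \sum_a cosl a x *: usl a.
Proof.
move=> hg x; rewrite hg /mxtrace sum2 => /eqP htr.
apply/matrixP => i j; rewrite summxE sum3 !mxE; move: htr.
c2 i; c2 j; rewrite /cosl; unf; move=> h; lra.
Qed.

Lemma sl_co_u a b : cosl a (usl b) = (a == b)%:R.
Proof. c3 a; c3 b; rewrite /cosl !mxE; unf; lra. Qed.

Lemma sl_br a b : lbr (usl a) (usl b) = \sum_c fsl a b c *: usl c.
Proof.
apply/matrixP => i j; rewrite /lbr !mxE !summxE !sum3 !sum2 !mxE.
c3 a; c3 b; c2 i; c2 j; unf; ring.
Qed.

Definition uso (a : 'I_3) : 'M[RR]_3 := \matrix_(i, j)
  (match nat_of_ord a, nat_of_ord i, nat_of_ord j with
   | 0,2,1 => 1 | 0,1,2 => -1 | 1,0,2 => 1 | 1,2,0 => -1 | 2,1,0 => 1 | 2,0,1 => -1 | _,_,_ => 0 end : RR).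
Definition coso (a : 'I_3) (x : 'M[RR]_3) : RR :=
  match nat_of_ord a with
  | 0 => x o32 o31 | 1 => x o30 o32 | _ => x o31 o30 end.

Lemma so_co_lin a al (x y : 'M[RR]_3) : coso a (al *: x + y) = al * coso a x + coso a y.
Proof. c3 a; rewrite /coso /o30 /o31 /o32 /= !mxE; ring. Qed.

Lemma so_u_g (g : {vspace 'M[RR]_3}) : (forall A : 'M[RR]_3, (A \in g) = (A^T == - A)) -> forall a, uso a \in g.
Proof. move=> hg a; rewrite hg; apply/eqP/matrixP => i j; rewrite !mxE; c3 a; c3 i; c3 j; unf; lra. Qed.

Lemma so_dec (g : {vspace 'M[RR]_3}) : (forall A : 'M[RR]_3, (A \in g) = (A^T == - A)) ->
  forall x, x \in g -> x = \sum_a coso a x *: uso a.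
Proof.
move=> hg x; rewrite hg => /eqP/matrixP hx.
have E : forall i j, x j i = - x i j by move=> i j; have := hx i j; rewrite !mxE.
apply/matrixP => i j; rewrite summxE sum3 !mxE.
move: (E o30 o30) (E o30 o31) (E o30 o32) (E o31 o30) (E o31 o31) (E o31 o32) (E o32 o30) (E o32 o31) (E o32 o32).
c3 i; c3 j; rewrite /coso; unf; move=> *; lra.
Qed.

Lemma so_co_u a b : coso a (uso b) = (a == b)%:R.
Proof. c3 a; c3 b; rewrite /coso !mxE; unf; lra. Qed.

Lemma so_br a b : lbr (uso a) (uso b) = \sum_c fso a b c *: uso c.
Proof.
apply/matrixP => i j; rewrite /lbr !mxE !summxE !sum3 !mxE.
c3 a; c3 b; c3 i; c3 j; unf; ring.
Qed.

Unset Implicit Arguments.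

Theorem corollary3 :
  forall (k : nat) (g : {vspace 'M[RR]_k}),
    (k = 2%N /\ (forall A : 'M[RR]_k, (A \in g) = (\tr A == 0))) \/
    (k = 3%N /\ (forall A : 'M[RR]_k, (A \in g) = (A^T == - A))) ->
  forall n : nat, (0 < n)%N ->
    (forall B : ('I_(n.*2) -> 'M[RR]_k) -> 'M[RR]_k,
        inS g B -> forall x, in_g g x -> B x = 0) /\
    (inS g (Bn g n) /\
     forall B : ('I_(n.*2.+1) -> 'M[RR]_k) -> 'M[RR]_k,
        inS g B -> exists c : RR, forall x, in_g g x -> B x = c *: Bn g n x).
Proof.
move=> k g [[hk hg]|[hk hg]] n _; subst k.
- exact: (gen_cor sl_co_lin (sl_u_g hg) (sl_dec hg) sl_co_u sl_br sl_H1 sl_H2 sl_H3 sl_H5 sl_H6 sl_lam0 sl_HK n).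
- exact: (gen_cor so_co_lin (so_u_g hg) (so_dec hg) so_co_u so_br so_H1 so_H2 so_H3 so_H5 so_H6 so_lam0 so_HK n).
Qed.
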